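(* Let $Q(k_1,\dots,k_d)$ be a positive definite diagonal quadratic form in $d\ge2$ variables with integer coefficients, and let $r_Q(n)$ denote the number of integral representations $Q(k_1,\dots,k_d)=n$. Then for every sufficiently small $\delta>0$ there is a constant $C_{d,\delta}$, depending only on $d$ and $\delta$ (and independent of the coefficients of $Q$ and of $n$), such that $r_Q(n)\le C_{d,\delta}\, n^{d/2-1+\delta}$ for all $n\in\mathbb N$. *)

(* Defs.v *)
From Stdlib Require Import Reals.
From mathcomp Require Import all_boot all_order all_algebra.

Set Implicit Arguments.
Unset Strict Implicit.
Unset Printing Implicit Defensive.

Definition diagQ (d : nat) (a : 'I_d -> int) (k : 'I_d -> int) : int :=
  (\sum_(i < d) a i * k i ^+ 2)%R.

(* For a positive definite diagonal form
   (all a_i >= 1) every solution satisfies |k_i| <= n, so the solution set is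
   contained in the box [-n, n]^d; we count over that box, encoding the
   coordinate k_i as  j - n  with  j : 'I_(2n+1). *)
Definition rQ (d : nat) (a : 'I_d -> int) (n : nat) : nat :=
  #|[set j : {ffun 'I_d -> 'I_(2 * n + 1)} |
     diagQ a (fun i => (Posz (j i) - Posz n)%R) == Posz n]|.

(* Main.v *)
Require Import Defs.
From Stdlib Require Import Reals.
From Stdlib Require Import Arith Lra.
From mathcomp Require Import all_boot all_order all_algebra.
From mathcomp Require zify ring.

Module P.
Import zify ring.
Set Implicit Arguments. Unset Strict Implicit. Unset Printing Implicit Defensive.

Definition dv n := size (divisors n).

Lemma size_divisors n : dv n = \prod_(f <- prime_decomp n) f.2.+1.
Proof.
rewrite /dv /divisors; elim: (prime_decomp n) => [|[p e] pd IH] /=.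
  by rewrite big_nil.
rewrite big_cons /= -IH.
set D := foldr _ _ _.
elim: e => [|e IHe] /=; first by rewrite mul1n.
by rewrite size_merge size_cat size_map IHe mulSn addnC.
Qed.

Lemma pow_bound1 N e : 0 < N -> (e.+1) ^ N <= N ^ N * 2 ^ e.
Proof.
move=> N0.
have h1 : e.+1 <= N * (e %/ N).+1.
  by have := ltn_ceil e N0; lia.
have h2 : (e %/ N).+1 <= 2 ^ (e %/ N) by apply: ltn_expl.
have h3 : 2 ^ (e %/ N * N) <= 2 ^ e by rewrite leq_exp2l // leq_trunc_div.
apply: (@leq_trans ((N * (e %/ N).+1) ^ N)); first by rewrite leq_exp2r.
rewrite expnMn leq_mul2l; apply/orP; right.
apply: (@leq_trans ((2 ^ (e %/ N)) ^ N)); first by rewrite leq_exp2r.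
by rewrite -expnM.
Qed.

Lemma pow_bound2 N e p : 2 ^ N <= p -> (e.+1) ^ N <= p ^ e.
Proof.
move=> hp.
have h2 : e.+1 <= 2 ^ e by apply: ltn_expl.
case: N hp => [|N] hp; first by rewrite expn0 expn_gt0; apply/orP; left; apply: leq_trans hp.
apply: (@leq_trans ((2 ^ e) ^ N.+1)); first by rewrite leq_exp2r.
rewrite -expnM mulnC expnM.
by case: e {h2} => [|e]; rewrite ?expn0 // leq_exp2r.
Qed.

Lemma dv_bound N : 0 < N -> forall n, 0 < n -> dv n ^ N <= (N ^ N) ^ (2 ^ N) * n.
Proof.
move=> N0 n n0.
have En := prod_prime_decomp n0; rewrite prime_decompE big_map /= in En.
rewrite size_divisors prime_decompE big_map /=.
set s := primes n.
have Xp : forall (F : nat -> nat), (\prod_(p <- s) F p) ^ N = \prod_(p <- s) F p ^ N.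
  by move=> F; elim: s => [|p s IH]; rewrite ?big_nil ?exp1n // !big_cons expnMn IH.
rewrite Xp.
pose c p := if p < 2 ^ N then N ^ N else 1.
have step : \prod_(p <- s) (logn p n).+1 ^ N <= \prod_(p <- s) (c p * p ^ logn p n).
  rewrite !big_seq; apply: leq_prod => p ps; rewrite /c; case: ifP => hp.
    apply: leq_trans (pow_bound1 _ N0) _.
    rewrite leq_mul2l; apply/orP; right.
    have pp : prime p by move: ps; rewrite mem_primes => /andP[].
    case: (logn p n) => [|e]; rewrite ?expn0 // leq_exp2r //; exact: prime_gt1.
  rewrite mul1n; apply: pow_bound2; rewrite leqNgt hp //.
apply: leq_trans step _.
rewrite big_split /= -En leq_mul2r; apply/orP; right.
rewrite -big_mkcond /= big_const_seq iter_muln_1.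
apply: leq_pexp2l; first by rewrite expn_gt0 N0.
rewrite -size_filter.
rewrite -[X in _ <= X](size_iota 0 (2 ^ N)).
apply: uniq_leq_size; first by rewrite filter_uniq // primes_uniq.
by move=> p; rewrite mem_filter mem_iota => /andP[h _]; rewrite add0n h.
Qed.

Import Order.TTheory GRing.Theory Num.Theory.
Local Open Scope ring_scope.

Definition fq (a b : int) (v : int * int) : int := a * v.1 ^+ 2 + b * v.2 ^+ 2.

Lemma coprime_sol a b m x y : fq a b (x, y) = m -> coprimez x y -> coprimez a m ->
  coprimez y m.
Proof.
rewrite /fq /= => hm cxy cam.
have cya : coprimez y a.
  have e1 : (gcdz y a %| a)%Z by apply: dvdz_gcdr.
  have e2 : (gcdz y a %| m)%Z.
    rewrite -hm; apply: rpredD; first exact: dvdz_mulr.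
    by apply: dvdz_mull; rewrite expr2; apply: dvdz_mulr; apply: dvdz_gcdl.
  have : (gcdz y a %| gcdz a m)%Z by rewrite dvdz_gcd e1 e2.
  move: cam; rewrite /coprimez => /eqP ->; rewrite dvdz1 /coprimez.
  by rewrite /gcdz /=.
have -> : m = (b * y) * y + a * x ^+ 2 by rewrite -hm expr2; ring.
rewrite /coprimez gcdzMDl Gauss_gcdzl; first by [].
by rewrite coprimez_pexpr // coprimez_sym.
Qed.

Lemma key_div a b m x0 y0 x y x' y' :
  coprimez a m -> coprimez x m -> coprimez y m -> coprimez y0 m ->
  fq a b (x0,y0) = m -> fq a b (x,y) = m -> fq a b (x',y') = m ->
  gcdz (x*y0 - x0*y) m = gcdz (x'*y0 - x0*y') m ->
  (m %| 2 * (x*y' - x'*y))%Z /\ (m %| 2 * (a*x*x' + b*y*y'))%Z.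
Proof.
rewrite /fq /= => cam cxm cym cy0m h0 h1 h2 hg.
set P := x*y0 - x0*y; set P' := x'*y0 - x0*y'.
set S := x*y0 + x0*y; set S' := x'*y0 + x0*y'.
have cma : coprimez m a by rewrite coprimez_sym.
have hPS : (m %| P * S)%Z.
  rewrite -(Gauss_dvdzr _ cma).
  have -> : a * (P * S) = (a * x ^+ 2 + b * y ^+ 2) * y0 ^+ 2 - (a * x0 ^+ 2 + b * y0 ^+ 2) * y ^+ 2.
    by rewrite /P /S; ring.
  by rewrite h1 h0; apply: rpredB; apply: dvdz_mulr; apply: dvdzz.
have hPS' : (m %| P' * S')%Z.
  rewrite -(Gauss_dvdzr _ cma).
  have -> : a * (P' * S') = (a * x' ^+ 2 + b * y' ^+ 2) * y0 ^+ 2 - (a * x0 ^+ 2 + b * y0 ^+ 2) * y' ^+ 2.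
    by rewrite /P' /S'; ring.
  by rewrite h2 h0; apply: rpredB; apply: dvdz_mulr; apply: dvdzz.
set h := gcdz P m.
have hS : (m %| h * S)%Z.
  have [u [v huv]] := Bezoutz P m.
  rewrite /h -huv.
  have -> : (u * P + v * m) * S = u * (P * S) + (v * S) * m by ring.
  by apply: rpredD; [apply: dvdz_mull | apply: dvdz_mull; apply: dvdzz].
have hS' : (m %| h * S')%Z.
  have [u [v huv]] := Bezoutz P' m.
  rewrite /h hg -huv.
  have -> : (u * P' + v * m) * S' = u * (P' * S') + (v * S') * m by ring.
  by apply: rpredD; [apply: dvdz_mull | apply: dvdz_mull; apply: dvdzz].
have hP : (h %| P)%Z by apply: dvdz_gcdl.
have hP' : (h %| P')%Z by rewrite /h hg; apply: dvdz_gcdl.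
have hPS'2 : (m %| P * S')%Z.
  rewrite -(divzK hP) -mulrA; exact: dvdz_mull.
have hP'S : (m %| P' * S)%Z.
  rewrite -(divzK hP') -mulrA; exact: dvdz_mull.
have d1 : (m %| 2 * (x * y' - x' * y))%Z.
  have cm : coprimez m (x * y0 ^+ 2).
    by rewrite coprimezMr !(coprimez_sym m) cxm coprimezXl.
  rewrite -(Gauss_dvdzr _ cm).
  have -> : x * y0 ^+ 2 * (2 * (x * y' - x' * y)) =
     2 * y' * (P * S) - y * (P * S') - y * (P' * S).
    by rewrite /P /S /P' /S'; ring.
  apply: rpredB; first apply: rpredB; by apply: dvdz_mull.
split => //.
have cm : coprimez m y by rewrite coprimez_sym.
rewrite -(Gauss_dvdzr _ cm).
have -> : y * (2 * (a * x * x' + b * y * y')) =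
   (2 * y') * m - (a * x) * (2 * (x * y' - x' * y)).
  by rewrite -h1; ring.
by apply: rpredB; [apply: dvdz_mull; apply: dvdzz | apply: dvdz_mull].
Qed.

Lemma count_fibers (T K : eqType) (key : T -> K) (ks : seq K) (c : nat) (s : seq T) :
  (forall v, v \in s -> key v \in ks) ->
  (forall k (t : seq T), uniq t -> (forall v, v \in t -> v \in s /\ key v = k) ->
     (size t <= c)%N) ->
  uniq s -> (size s <= c * size ks)%N.
Proof.
elim: ks s => [|k ks IH] s hk hf us.
  case: s hk {hf us} => [|v s] hk //; have := hk v; rewrite mem_head in_nil.
  by move=> /(_ isT).
rewrite -(count_predC (fun v => key v == k)) /= mulnS.
apply: leq_add.
  rewrite -size_filter; apply: (hf k); first by rewrite filter_uniq.
  by move=> v; rewrite mem_filter => /andP[/eqP -> ->].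
rewrite -size_filter; apply: IH; last by rewrite filter_uniq.
  move=> v; rewrite mem_filter /= => /andP[hne hv].
  by move: (hk v hv); rewrite inE (negbTE hne).
move=> k' t ut ht; apply: (hf k') => // v /ht [hv ->]; split => //.
by move: hv; rewrite mem_filter => /andP[].
Qed.

Definition r5 : seq int := [:: -2; -1; 0; 1; 2].
Definition L25 : seq (int * int) := [seq (i, j) | i <- r5, j <- r5].

Lemma in_r5 (z : int) : -2 <= z <= 2 -> z \in r5.
Proof.
move=> /andP[h1 h2]; rewrite !inE.
have : (z == -2) || (z == -1) || (z == 0) || (z == 1) || (z == 2) by lia.
by rewrite -!orbA.
Qed.

Lemma fiber25 a b m k x0 y0 t : 0 < a -> 0 < b -> 0 < m ->
  coprimez a m -> coprimez b m ->
  fq a b (x0, y0) = m -> coprimez x0 y0 -> uniq t ->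
  (forall w, w \in t -> [/\ fq a b w = m, coprimez w.1 w.2 &
      gcdz (w.1 * y0 - x0 * w.2) m = k]) ->
  (size t <= 25)%N.
Proof.
move=> a0 b0 m0 cam cbm h0 c0 ut ht.
have cx : forall x y, fq a b (x, y) = m -> coprimez x y -> coprimez x m.
  move=> x y hxy cxy; apply: (@coprime_sol b a m y x) => //.
    by rewrite /fq /= addrC.
  by rewrite coprimez_sym.
have cy : forall x y, fq a b (x, y) = m -> coprimez x y -> coprimez y m.
  by move=> x y hxy cxy; apply: (@coprime_sol a b m x y).
case: t ut ht => [|[x1 y1] t'] // ut ht.
have [h1 c1 g1] := ht (x1, y1) (mem_head _ _).
simpl in c1, g1.
pose phi (w : int * int) :=
  ((2 * (a * x1 * w.1 + b * y1 * w.2)) %/ m, (2 * (x1 * w.2 - w.1 * y1)) %/ m)%Z.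
have kd : forall w, w \in (x1, y1) :: t' ->
    (m %| 2 * (x1 * w.2 - w.1 * y1))%Z /\ (m %| 2 * (a * x1 * w.1 + b * y1 * w.2))%Z.
  move=> [x y] hw; have [hw1 hw2 hw3] := ht _ hw; simpl in hw2, hw3.
  apply: (@key_div a b m x0 y0 x1 y1 x y) => //.
  - exact: (cx _ _ h1 c1).
  - exact: (cy _ _ h1 c1).
  - exact: (cy _ _ h0 c0).
  - by rewrite g1 hw3.
have mn0 : m != 0 by rewrite gt_eqF.
have inj : {in (x1, y1) :: t' &, injective phi}.
  move=> [x y] [x' y'] hw hw' [e1 e2].
  have [d1 d2] := kd _ hw; have [d1' d2'] := kd _ hw'.
  simpl in d1, d2, d1', d2'.
  have eB : a * x1 * x + b * y1 * y = a * x1 * x' + b * y1 * y'.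
    apply: (@mulfI _ 2) => //.
    by rewrite -(divzK d2) -(divzK d2') e1.
  have eD : x1 * y - x * y1 = x1 * y' - x' * y1.
    apply: (@mulfI _ 2) => //.
    by rewrite -(divzK d1) -(divzK d1') e2.
  have ex : m * x = m * x'.
    have -> : m * x = x1 * (a * x1 * x + b * y1 * y) - b * y1 * (x1 * y - x * y1).
      by rewrite -h1 /fq /=; ring.
    have -> : m * x' = x1 * (a * x1 * x' + b * y1 * y') - b * y1 * (x1 * y' - x' * y1).
      by rewrite -h1 /fq /=; ring.
    by rewrite eB eD.
  have ey : m * y = m * y'.
    have -> : m * y = y1 * (a * x1 * x + b * y1 * y) + a * x1 * (x1 * y - x * y1).
      by rewrite -h1 /fq /=; ring.
    have -> : m * y' = y1 * (a * x1 * x' + b * y1 * y') + a * x1 * (x1 * y' - x' * y1).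
      by rewrite -h1 /fq /=; ring.
    by rewrite eB eD.
  by rewrite (mulfI mn0 ex) (mulfI mn0 ey).
rewrite -(size_map phi).
have -> : 25%N = size L25 by [].
apply: uniq_leq_size; first by rewrite map_inj_in_uniq.
move=> z /mapP [[x y] hw ->].
have [d1 d2] := kd _ hw; simpl in d1, d2.
have [hw1 _ _] := ht _ hw.
set be := ((2 * (a * x1 * x + b * y1 * y)) %/ m)%Z.
set ga := ((2 * (x1 * y - x * y1)) %/ m)%Z.
have eq4 : be ^+ 2 + a * b * ga ^+ 2 = 4.
  apply: (@mulIf _ (m ^+ 2)); first by rewrite expf_neq0.
  have -> : (be ^+ 2 + a * b * ga ^+ 2) * m ^+ 2 = (be * m) ^+ 2 + a * b * (ga * m) ^+ 2 by ring.
  rewrite /be /ga !divzK //.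
  have -> : 4 * m ^+ 2 = 4 * (fq a b (x1, y1) * fq a b (x, y)) by rewrite h1 hw1 expr2.
  by rewrite /fq /=; ring.
have hab : 1 <= a * b by lia.
have hb : -2 <= be <= 2 by nia.
have hg : -2 <= ga <= 2 by nia.
by rewrite /L25; apply/allpairsP; exists (be, ga); rewrite /= !in_r5.
Qed.


Lemma prim_bound a b m s : 0 < a -> 0 < b -> 0 < m -> coprimez a m -> coprimez b m ->
  uniq s -> (forall w, w \in s -> fq a b w = m /\ coprimez w.1 w.2) ->
  (size s <= 25 * dv `|m|)%N.
Proof.
move=> a0 b0 m0 cam cbm us hs.
case: s us hs => [|[x0 y0] s'] // us hs.
have [h0 c0] := hs _ (mem_head _ _); simpl in c0.
rewrite /dv; apply: (@count_fibers _ _ (fun w : int * int => gcdn `|(w.1 * y0 - x0 * w.2)%R| `|m|)) => //.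
  move=> v _; rewrite -dvdn_divisors ?dvdn_gcdr //.
  by rewrite absz_gt0 gt_eqF.
move=> k t ut ht.
apply: (@fiber25 a b m (Posz k) x0 y0 t) => //.
move=> w hw; have [hw1 hw2] := ht _ hw; have [hs1 hs2] := hs _ hw1.
by split => //; rewrite /gcdz hw2.
Qed.

Lemma dv_mono m n : (m %| n)%N -> (0 < n)%N -> (dv m <= dv n)%N.
Proof.
move=> mn n0; have m0 : (0 < m)%N by apply: dvdn_gt0 n0 mn.
apply: uniq_leq_size; first exact: divisors_uniq.
move=> k; rewrite -!dvdn_divisors // => km; exact: dvdn_trans km mn.
Qed.

Lemma cop_bound a b n s : 0 < a -> 0 < b -> 0 < n -> coprimez a n -> coprimez b n ->
  uniq s -> (forall w, w \in s -> fq a b w = n) ->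
  (size s <= 25 * dv `|n| * dv `|n|)%N.
Proof.
move=> a0 b0 n0 can cbn us hs.
have n0' : (0 < `|n|)%N by rewrite absz_gt0 gt_eqF.
rewrite /dv.
apply: (@count_fibers _ _ (fun w : int * int => gcdn `|w.1| `|w.2|) _ (25 * size (divisors `|n|))) => //.
  move=> [x y] hw; rewrite -dvdn_divisors //=.
  have : (gcdz x y %| n)%Z.
    rewrite -(hs _ hw) /fq /=; apply: rpredD; apply: dvdz_mull; rewrite expr2;
      apply: dvdz_mull; [apply: dvdz_gcdl | apply: dvdz_gcdr].
  by [].
move=> g t ut ht.
case: t ut ht => [|[x1 y1] t'] // ut ht.
have [hw1 hg1] := ht _ (mem_head _ _); have hn1 := hs _ hw1; simpl in hg1.
set G := Posz g.
have G0 : 0 < G.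
  rewrite /G ltz_nat -hg1 gcdn_gt0 !absz_gt0; case: eqP => [ex|]; last by []; case: eqP => [ey|]; last by [].
  by move: hn1 n0; rewrite /fq ex ey /= => <-; rewrite expr2 !mulr0 addr0 ltxx.
have GN0 : G != 0 by rewrite gt_eqF.
pose psi (w : int * int) := ((w.1 %/ G)%Z, (w.2 %/ G)%Z).
have dvG : forall w, w \in (x1, y1) :: t' -> (G %| w.1)%Z /\ (G %| w.2)%Z.
  move=> w hw; have [_ hg] := ht _ hw.
  have -> : G = gcdz w.1 w.2 by rewrite /G -hg.
  by split; [apply: dvdz_gcdl | apply: dvdz_gcdr].
have fpsi : forall w, w \in (x1, y1) :: t' -> fq a b (psi w) * G ^+ 2 = n.
  move=> w hw; have [d1 d2] := dvG _ hw.
  rewrite -(hs _ (proj1 (ht _ hw))) /fq /psi /=.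
  rewrite -[in RHS](divzK d1) -[in RHS](divzK d2).
  clearbody G; move: (w.1 %/ G)%Z (w.2 %/ G)%Z => q1 q2; ring.
set m := fq a b (psi (x1, y1)).
have hmn : m * G ^+ 2 = n by apply: fpsi; exact: mem_head.
have fm : forall w, w \in (x1, y1) :: t' -> fq a b (psi w) = m.
  move=> w hw; apply: (@mulIf _ (G ^+ 2)); first by rewrite expf_neq0.
  by rewrite fpsi // hmn.
have m0 : 0 < m.
  have G2 : 0 < G ^+ 2 by rewrite exprn_gt0.
  by move: n0; rewrite -hmn pmulr_lgt0.
have mdn : (`|m| %| `|n|)%N by rewrite -hmn abszM dvdn_mulr.
have inj : {in (x1, y1) :: t' &, injective psi}.
  move=> w w' hw hw' [e1 e2]; have [d1 d2] := dvG _ hw; have [d1' d2'] := dvG _ hw'.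
  by case: w w' {hw hw'} e1 e2 d1 d2 d1' d2' => x y [x' y'] /= e1 e2 d1 d2 d1' d2';
    rewrite -(divzK d1) -(divzK d1') e1 -(divzK d2) -(divzK d2') e2.
rewrite -(size_map psi).
apply: (@leq_trans (25 * dv `|m|)); last first.
  by rewrite leq_mul2l; apply/orP; right; apply: dv_mono.
apply: (prim_bound a0 b0 m0).
- exact: coprimez_dvdr mdn can.
- exact: coprimez_dvdr mdn cbn.
- by rewrite map_inj_in_uniq.
move=> z /mapP [w hw ->]; split; first exact: fm.
have [d1 d2] := dvG _ hw; have [_ hg] := ht _ hw.
apply/eqP; apply: (@mulfI _ G) => //.
rewrite mulr1 /psi /=.
have -> : G * gcdz (w.1 %/ G)%Z (w.2 %/ G)%Z = `|G|%:Z * gcdz (w.1 %/ G)%Z (w.2 %/ G)%Z.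
  by rewrite gtz0_abs.
rewrite mulz_gcdr ![G * _]mulrC !divzK //.
by rewrite /gcdz hg.
Qed.

Lemma desc_a (n : nat)
  (IH : forall n', (n' < n)%N -> forall a b : int, 0 < a -> 0 < b -> (0 < n')%N ->
     forall s, uniq s -> (forall w, w \in s -> fq a b w = Posz n') ->
     (size s <= 25 * dv n' * dv n')%N)
  (a b : int) (p : nat) : prime p -> (p %| `|a|)%N -> (p %| n)%N ->
  0 < a -> 0 < b -> (0 < n)%N ->
  forall s, uniq s -> (forall w, w \in s -> fq a b w = Posz n) ->
  (size s <= 25 * dv n * dv n)%N.
Proof.
move=> pp pa pn a0 b0 n0 s us hs.
have p1 : (1 < p)%N by apply: prime_gt1.
set n' := (n %/ p)%N.
have ltn' : (n' < n)%N by apply: ltn_Pdiv.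
have En : n = (n' * p)%N by rewrite /n' divnK.
have n'0 : (0 < n')%N by move: n0; rewrite En muln_gt0 => /andP[].
have dvn : (dv n' <= dv n)%N by apply: dv_mono => //; rewrite [X in (_ %| X)%N]En dvdn_mulr.
have Hfin : (25 * dv n' * dv n' <= 25 * dv n * dv n)%N.
  by apply: leq_mul => //; apply: leq_mul.
apply: leq_trans _ Hfin.
have pz : (Posz p %| a)%Z by [].
have P0 : Posz p != 0 by rewrite eqz_nat -lt0n prime_gt0.
have Pg0 : 0 < Posz p by rewrite ltz_nat prime_gt0.
set a' := (a %/ p)%Z.
have Ea : a = a' * p by rewrite /a' divzK.
have a'0 : 0 < a' by move: a0; rewrite Ea pmulr_lgt0.
have Enz : Posz n = Posz n' * Posz p by rewrite En PoszM.
case pb: (p %| `|b|)%N.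
  have pbz : (Posz p %| b)%Z by [].
  set b' := (b %/ p)%Z.
  have Eb : b = b' * p by rewrite /b' divzK.
  have b'0 : 0 < b' by move: b0; rewrite Eb pmulr_lgt0.
  apply: (IH n' ltn' a' b' a'0 b'0 n'0 s us) => w hw.
  apply: (@mulIf _ (Posz p)) => //.
  by rewrite -Enz -(hs _ hw) Ea Eb /fq; ring.
pose phi (w : int * int) := (w.1, (w.2 %/ p)%Z).
have dy : forall w, w \in s -> (Posz p %| w.2)%Z.
  move=> w hw.
  have h1 : (Posz p %| b * w.2 ^+ 2)%Z.
    have -> : b * w.2 ^+ 2 = Posz n - a * w.1 ^+ 2 by rewrite -(hs _ hw) /fq; ring.
    apply: rpredB; first by rewrite Enz; apply: dvdz_mull; apply: dvdzz.
    exact: dvdz_mulr.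
  move: h1; rewrite dvdzE abszM abszX Euclid_dvdM // pb /= Euclid_dvdX //.
  by case/andP.
rewrite -(size_map phi).
apply: (IH n' ltn' a' (b * p) a'0) => //.
- by rewrite pmulr_lgt0.
- rewrite map_inj_in_uniq // => [[x y] [x' y']] hw hw' [e1 e2].
  move: (dy _ hw) (dy _ hw') => /= d d'.
  by rewrite /= e1 -(divzK d) -(divzK d') e2.
move=> z /mapP [w hw ->].
apply: (@mulIf _ (Posz p)) => //.
rewrite -Enz -(hs _ hw) Ea /fq /phi /=.
rewrite -[in RHS](divzK (dy _ hw)).
move: (w.2 %/ p)%Z => q; ring.
Qed.

Lemma bad_prime (a : int) (n : nat) : (0 < n)%N -> ~~ coprimez a (Posz n) ->
  exists p, [/\ prime p, (p %| `|a|)%N & (p %| n)%N].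
Proof.
move=> n0; rewrite /coprimez /gcdz /= => hg.
have g1 : (1 < gcdn `|a| n)%N.
  have : (0 < gcdn `|a| n)%N by rewrite gcdn_gt0 n0 orbT.
  by move: hg; case: (gcdn `|a| n) => [|[|k]].
exists (pdiv (gcdn `|a| n)); split; first exact: pdiv_prime.
  exact: dvdn_trans (pdiv_dvd _) (dvdn_gcdl _ _).
exact: dvdn_trans (pdiv_dvd _) (dvdn_gcdr _ _).
Qed.

Lemma bin_bound (n : nat) : forall a b : int, 0 < a -> 0 < b -> (0 < n)%N ->
     forall s, uniq s -> (forall w, w \in s -> fq a b w = Posz n) ->
     (size s <= 25 * dv n * dv n)%N.
Proof.
elim/ltn_ind: n => n IH a b a0 b0 n0 s us hs.
case ca: (coprimez a n).
  case cb: (coprimez b n).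
    have n0' : 0 < Posz n by rewrite ltz_nat.
    exact: (cop_bound a0 b0 n0' ca cb us hs).
  have [p [pp pb pn]] := bad_prime n0 (negbT cb).
  rewrite -(size_map (fun w : int * int => (w.2, w.1))).
  apply: (desc_a IH pp pb pn b0 a0 n0).
    by rewrite map_inj_uniq // => [[x y] [x' y']] [-> ->].
  by move=> z /mapP [w hw ->]; rewrite -(hs _ hw) /fq /= addrC.
have [p [pp pa pn]] := bad_prime n0 (negbT ca).
exact: (desc_a IH pp pa pn a0 b0 n0).
Qed.

Local Close Scope ring_scope.

Definition cnt d (a : 'I_d -> int) (M : nat) (n : int) : nat :=
  #|[set j : {ffun 'I_d -> 'I_(2 * M + 1)} |
     diagQ a (fun i => (Posz (j i) - Posz M)%R) == n]|.

Lemma rQ_cnt d (a : 'I_d -> int) n : rQ a n = cnt a n (Posz n).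
Proof. by []. Qed.


Local Open Scope ring_scope.

Lemma diagQ_ge0 d (a : 'I_d -> int) k : (forall i, 0 < a i) -> 0 <= diagQ a k.
Proof.
move=> ha; rewrite /diagQ; apply: sumr_ge0 => i _.
by apply: mulr_ge0; [apply: ltW | apply: sqr_ge0].
Qed.

Lemma cnt_neg d (a : 'I_d -> int) M n : (forall i, 0 < a i) -> n < 0 -> cnt a M n = 0%N.
Proof.
move=> ha hn; rewrite /cnt; apply: eq_card0 => j; rewrite inE; apply/negbTE.
apply/eqP => e; have := diagQ_ge0 (fun i => (Posz (j i) - Posz M)) ha.
by rewrite e leNgt hn.
Qed.

Lemma cnt_zero d (a : 'I_d -> int) M : (forall i, 0 < a i) -> (cnt a M 0 <= 1)%N.
Proof.
move=> ha; apply/card_le1_eqP => j j'; rewrite !inE => /eqP hj /eqP hj'.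
have H : forall (j : {ffun 'I_d -> 'I_(2 * M + 1)}),
    diagQ a (fun i => (Posz (j i) - Posz M)) = 0 -> forall i, nat_of_ord (j i) = M.
  move=> j0 h0 i.
  have nn : forall i', predT i' -> 0 <= a i' * (Posz (j0 i') - Posz M) ^+ 2.
    by move=> i' _; apply: mulr_ge0; [apply: ltW | apply: sqr_ge0].
  have := @psumr_eq0P _ _ predT (fun i => a i * (Posz (j0 i) - Posz M) ^+ 2) nn h0 i isT.
  move/eqP; rewrite mulf_eq0 gt_eqF ?ha //= sqrf_eq0 subr_eq0 => /eqP.
  by case.
apply/ffunP => i; apply: val_inj => /=.
by rewrite (H _ hj) (H _ hj').
Qed.

Lemma cnt_rec d (a : 'I_d.+1 -> int) M n :
  (cnt a M n <= \sum_(j0 : 'I_(2 * M + 1))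
     cnt (fun i => a (lift ord0 i)) M (n - a ord0 * (Posz j0 - Posz M) ^+ 2))%N.
Proof.
rewrite /cnt -sum1_card (partition_big (fun j : {ffun _} => j ord0) predT) //=.
apply: leq_sum => j0 _.
rewrite sum1dep_card.
set B := [set _ | _].
pose f := fun j : {ffun 'I_d.+1 -> 'I_(2 * M + 1)} => ([ffun i : 'I_d => j (lift ord0 i)] : {ffun 'I_d -> 'I_(2 * M + 1)}).
have inj : {in B &, injective f}.
  move=> j j'; rewrite !inE => /andP[_ /eqP h] /andP[_ /eqP h'] e.
  apply/ffunP => i; case: (unliftP ord0 i) => [i'|] ->; last by rewrite h h'.
  by have := congr1 (fun g : {ffun 'I_d -> 'I_(2 * M + 1)} => g i') e; rewrite /f !ffunE.
rewrite -(card_in_imset inj); apply: subset_leq_card.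
apply/subsetP => g /imsetP [j hjB ->].
move: hjB; rewrite !inE => /andP[/eqP hj /eqP h0].
rewrite -hj.
rewrite /diagQ big_ord_recl /= h0.
apply/eqP; rewrite addrC addKr; apply: eq_bigr => i _; rewrite /f ffunE //.
Qed.

Lemma abs_lt (z : int) k : 0 <= z <= Posz k -> (`|z| < k.+1)%N.
Proof. by move=> /andP[h1 h2]; rewrite -ltz_nat gez0_abs //; lia. Qed.

Lemma count_sq M (n : nat) : (0 < n)%N ->
  (#|[set j0 : 'I_(2 * M + 1) | ((Posz j0 - Posz M) ^+ 2 <= Posz n)%R]| ^ 2 <= 9 * n)%N.
Proof.
move=> n0.
set s := Nat.sqrt n.
have [hs1 hs2] := Nat.sqrt_spec' n; rewrite -/s in hs1 hs2.
have s1 : (1 <= s)%N.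
  have h := proj1 (Nat.sqrt_le_square n 1) ltac:(lia); rewrite /s; lia.
set B := [set _ | _].
pose f := fun j0 : 'I_(2 * M + 1) => (inord `|(Posz j0 - Posz M + Posz s)%R|%N : 'I_(2 * s).+1).
have bnd : forall j0, j0 \in B -> -(Posz s) <= Posz j0 - Posz M <= Posz s.
  move=> j0; rewrite inE => h.
  have h2' : Posz n < (Posz s + 1) ^+ 2.
    have : (n < s.+1 * s.+1)%N by lia.
    by move=> hh; rewrite -ltz_nat in hh; move: hh; rewrite PoszM; nia.
  nia.
have inj : {in B &, injective f}.
  move=> j j' hj hj' e.
  have := congr1 val e; rewrite /f /= !inordK; last first.
  - by apply: abs_lt; have := bnd _ hj; have := bnd _ hj'; lia.
  - by apply: abs_lt; have := bnd _ hj; have := bnd _ hj'; lia.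
  move=> /(congr1 Posz); rewrite !gez0_abs; last first.
  - by have := bnd _ hj; have := bnd _ hj'; lia.
  - by have := bnd _ hj; have := bnd _ hj'; lia.
  move=> e2; apply: val_inj => /=; apply/eqP; rewrite -eqz_nat; apply/eqP.
  lia.
have cardB : (#|B| <= (2 * s).+1)%N.
  rewrite -(card_in_imset inj).
  by apply: leq_trans (max_card _) _; rewrite card_ord.
apply: (@leq_trans ((2 * s).+1 ^ 2)); first by rewrite leq_exp2r.
apply: (@leq_trans (9 * (s * s))); last by rewrite leq_mul2l; apply/orP; right; lia.
nia.
Qed.

Lemma step_bound M N K e (n : nat) (t : 'I_(2 * M + 1) -> nat) : (0 < N)%N -> (0 < n)%N ->
  (forall j0, t j0 = 0%N \/
     (((Posz j0 - Posz M) ^+ 2 <= Posz n)%R /\ (t j0 ^ (2 * N) <= K * n ^ e)%N)) ->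
  ((\sum_j0 t j0) ^ (2 * N) <= 9 ^ N * K * n ^ (e + N))%N.
Proof.
move=> N0 n0 ht.
set B := [set j0 : 'I_(2 * M + 1) | ((Posz j0 - Posz M) ^+ 2 <= Posz n)%R].
set T := (\max_j0 t j0)%N.
have [js hT] := @bigop.eq_bigmax _ t (ltac:(by rewrite card_ord addn1)).
have hT2 : (T ^ (2 * N) <= K * n ^ e)%N.
  rewrite /T hT; case: (ht js) => [->|[_ h]] //.
  by rewrite exp0n // muln_gt0 N0.
have hs : (\sum_j0 t j0 <= #|B| * T)%N.
  rewrite -sum_nat_const [X in (_ <= X)%N]big_mkcond /=.
  apply: leq_sum => j0 _; case: ifP => hj0; first exact: bigop.leq_bigmax.
  case: (ht j0) => [->//|[h _]].
  by move: hj0; rewrite inE h.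
apply: (@leq_trans ((#|B| * T) ^ (2 * N))); first by rewrite leq_exp2r // muln_gt0 N0.
rewrite expnMn -mulnA mulnC.
rewrite mulnC expnD mulnA [X in (_ <= X * _)%N]mulnC -mulnA.
apply: (@leq_trans ((9 ^ N * n ^ N) * (K * n ^ e))).
  apply: leq_mul => //.
  rewrite expnM -expnMn leq_exp2r //.
  exact: count_sq.
rewrite leq_eqVlt; apply/orP; left; apply/eqP; ring.
Qed.

Lemma base2 (a : 'I_2 -> int) M (n : nat) : (forall i, 0 < a i) -> (0 < n)%N ->
  (cnt a M (Posz n) <= 25 * dv n * dv n)%N.
Proof.
move=> ha n0.
rewrite /cnt cardE.
set A := [set _ | _].
pose g := fun j : {ffun 'I_2 -> 'I_(2 * M + 1)} =>
  (Posz (j ord0) - Posz M, Posz (j (lift ord0 ord0)) - Posz M).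
rewrite -(size_map g).
apply: (bin_bound (ha ord0) (ha (lift ord0 ord0)) n0).
  rewrite map_inj_in_uniq ?enum_uniq // => j j' _ _ [e1 e2].
  apply/ffunP => i; apply: val_inj; apply/eqP; rewrite -eqz_nat; apply/eqP.
  case: (unliftP ord0 i) => [i'|] ->.
    by rewrite (ord1 i'); move: e2; rewrite -!(addrC (- Posz M)) => /addrI.
  by move: e1; rewrite -!(addrC (- Posz M)) => /addrI.
move=> w /mapP [j]; rewrite mem_enum inE => /eqP hj ->.
by rewrite -hj /fq /diagQ !big_ord_recl big_ord0 addr0.
Qed.

Lemma main_nat N : (0 < N)%N -> forall k, exists K : nat, (0 < K)%N /\
  forall (a : 'I_k.+2 -> int), (forall i, 0 < a i) -> forall M (n : nat), (0 < n)%N ->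
  (cnt a M (Posz n) ^ (2 * N) <= K * n ^ (k * N + 1))%N.
Proof.
move=> N0; elim=> [|k [K [K0 IH]]].
  have N4 : (0 < 4 * N)%N by rewrite muln_gt0 N0.
  set C := (((4 * N) ^ (4 * N)) ^ (2 ^ (4 * N)))%N.
  exists (25 ^ (2 * N) * C)%N; split.
    by rewrite muln_gt0 !expn_gt0 !muln_gt0 N0.
  move=> a ha M n n0; rewrite mul0n add0n expn1.
  apply: (@leq_trans ((25 * dv n * dv n) ^ (2 * N))).
    by rewrite leq_exp2r ?muln_gt0 ?N0 // base2.
  rewrite -mulnA expnMn -mulnA leq_mul2l; apply/orP; right.
  rewrite expnMn -expnD.
  have -> : (2 * N + 2 * N = 4 * N)%N by lia.
  exact: dv_bound.
exists (9 ^ N * K)%N; split; first by rewrite muln_gt0 expn_gt0 K0.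
move=> a ha M n n0.
apply: (@leq_trans ((\sum_(j0 : 'I_(2 * M + 1))
     cnt (fun i => a (lift ord0 i)) M (Posz n - a ord0 * (Posz j0 - Posz M) ^+ 2)) ^ (2 * N))).
  by rewrite leq_exp2r ?muln_gt0 ?N0 // cnt_rec.
have -> : (k.+1 * N + 1 = (k * N + 1) + N)%N by rewrite mulSn; lia.
apply: step_bound => // j0.
set r := Posz n - a ord0 * (Posz j0 - Posz M) ^+ 2.
have ha' : forall i, 0 < a (lift ord0 i) by move=> i; apply: ha.
case: (ltrP r 0) => hr.
  by left; apply: cnt_neg.
right; split.
  have := ha ord0; move: hr; rewrite /r; nia.
case: (r =P 0) => [r0 | /eqP rn0].
  rewrite r0; apply: (@leq_trans 1).
    apply: (@leq_trans (1 ^ (2 * N))); last by rewrite exp1n.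
    by rewrite leq_exp2r ?muln_gt0 ?N0 //; apply: cnt_zero.
  by rewrite muln_gt0 K0 expn_gt0 n0.
have [r' er] : exists r' : nat, r = Posz r'.
  by exists `|r|%N; rewrite gez0_abs.
rewrite er; apply: leq_trans (IH _ ha' M r' _) _.
  by rewrite lt0n; apply/eqP => r0; move: rn0; rewrite er r0.
rewrite leq_mul2l; apply/orP; right; rewrite leq_exp2r ?addn1 //.
rewrite -lez_nat -er /r.
by rewrite gerBl; apply: mulr_ge0; [apply: ltW | apply: sqr_ge0].
Qed.

End P.

Lemma INR_expn m n : INR (m ^ n)%N = Rpow_def.pow (INR m) n.
Proof.
elim: n => [|n IH]; first by rewrite expn0.
by rewrite expnS mult_INR IH.
Qed.

Lemma INR_muln m n : INR (m * n)%N = Rmult (INR m) (INR n).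
Proof. exact: mult_INR. Qed.

Local Open Scope R_scope.

Lemma real_conv (c K N k n : nat) (delta : R) :
  (0 < N)%N -> (0 < K)%N -> (0 < n)%N -> / INR N < delta ->
  (c ^ (2 * N) <= K * n ^ (k * N + 1))%N ->
  INR c <= Rpower (INR K) (/ (2 * INR N)) *
           Rpower (INR n) (INR k.+2 / 2 - 1 + delta).
Proof.
move=> N0 K0 n0 hd hc.
have hN : 0 < INR N by apply: lt_0_INR; apply/ltP.
have hK : 0 < INR K by apply: lt_0_INR; apply/ltP.
have hn : 1 <= INR n by apply: (le_INR 1); apply/leP.
have hc' : (INR c) ^ (2 * N) <= INR K * INR n ^ (k * N + 1).
  by rewrite -!INR_expn -INR_muln; apply: le_INR; apply/leP.
have pos : 0 < Rpower (INR K) (/ (2 * INR N)) * Rpower (INR n) (INR k.+2 / 2 - 1 + delta).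
  by apply: Rmult_lt_0_compat; apply: exp_pos.
case: (Req_dec (INR c) 0) => [->|cn0]; first lra.
have cpos : 0 < INR c by have := pos_INR c; lra.
have e1 : INR c = Rpower (INR c ^ (2 * N)) (/ (2 * INR N)).
  rewrite -Rpower_pow // Rpower_mult mult_INR.
  have -> : INR 2 * INR N * / (2 * INR N) = 1 by rewrite /=; field; lra.
  by rewrite Rpower_1.
rewrite e1.
have hnp : 0 < INR n by lra.
apply: Rle_trans.
  apply: (Rle_Rpower_l _ _ _ _ (conj _ hc')).
  - by apply: Rlt_le; apply: Rinv_0_lt_compat; lra.
  - by apply: pow_lt.
rewrite -Rpower_mult_distr //; last by apply: pow_lt.
apply: Rmult_le_compat_l; first by apply: Rlt_le; apply: exp_pos.
rewrite -Rpower_pow // Rpower_mult.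
apply: Rle_Rpower => //.
rewrite plus_INR mult_INR !S_INR /=.
have : / INR N = 1 / INR N by field; lra.
move=> hh.
have -> : (INR k * INR N + (0 + 1)) * / (2 * INR N) = INR k / 2 + / 2 * / INR N by field; lra.
have : 0 < / INR N by apply: Rinv_0_lt_compat.
lra.
Qed.

Theorem lemma3p5 :
  forall d : nat, (2 <= d)%N ->
  exists delta0 : R, Rlt 0 delta0 /\
  forall delta : R, Rlt 0 delta -> Rlt delta delta0 ->
  exists C : R,
  forall (a : 'I_d -> int), (forall i, (0 < a i)%R) ->
  forall n : nat, (1 <= n)%N ->
    Rle (INR (rQ a n))
        (Rmult C (Rpower (INR n) (Rplus (Rminus (Rdiv (INR d) 2) 1) delta))).
Proof.
move=> d hd; exists 1; split; first lra.
move=> delta hd0 _.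
have [N [hN hN0]] := archimed_cor1 delta hd0.
have N0 : (0 < N)%N by apply/ltP.
case: d hd => [|[|k]] // _.
have [K [K0 HK]] := P.main_nat N0 k.
exists (Rpower (INR K) (/ (2 * INR N))).
move=> a ha n n0.
rewrite P.rQ_cnt.
apply: real_conv => //.
exact: HK.
Qed.
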